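(* Let $\mathbf{A}_C\in\{0,1\}^{U\times N}$, $\mathcal{E}=\{(i,j): [\mathbf{A}_C]_{ij}=1\}$, $\mathbf{B}=\mathbf{A}_C^T\mathbf{A}_C$, and let $\mathbf{u}$ be a unit-norm eigenvector of $\mathbf{B}$ with nonnegative entries associated with $\lambda_{\max}(\mathbf{B})$. For $\mathcal{E}_{\mathcal{R}}\subseteq\mathcal{E}$ define $$f(\mathcal{E}_{\mathcal{R}})=2\sum_{(i,j)\in\mathcal{E}_{\mathcal{R}}}\mathbf{u}^T\mathbf{A}_C^T\mathbf{e}^U_i[\mathbf{u}]_j-\sum_{i=1}^{U}\ \sum_{j:(i,j)\in\mathcal{E}_{\mathcal{R}}}\ \sum_{s:(i,s)\in\mathcal{E}_{\mathcal{R}}}[\mathbf{u}]_j[\mathbf{u}]_s .$$ Then $f$ is a monotone (nondecreasing) submodular set function on subsets of $\mathcal{E}$; that is, for all $\mathcal{E}_{\mathcal{R}1}\subseteq\mathcal{E}_{\mathcal{R}2}\subseteq\mathcal{E}$ we have $f(\mathcal{E}_{\mathcal{R}2})\ge f(\mathcal{E}_{\mathcal{R}1})$, and for every $e\in\mathcal{E}\setminus\mathcal{E}_{\mathcal{R}2}$, $$f(\mathcal{E}_{\mathcal{R}2}\cup\{e\})-f(\mathcal{E}_{\mathcal{R}2})\le f(\mathcal{E}_{\mathcal{R}1}\cup\{e\})-f(\mathcal{E}_{\mathcal{R}1}).$$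
   Context: $\mathbf{A}_C$ is the adjacency matrix of a bipartite user–host access graph with $U$ users and $N$ hosts; $\mathcal{E}$ is its edge set. $\mathbf{e}^U_i$ is the $U\times1$ canonical basis vector with $1$ in position $i$. $\lambda_{\max}(\mathbf{B})$ is the largest eigenvalue of $\mathbf{B}$; $[\mathbf{u}]_j$ is the $j$-th entry of $\mathbf{u}$. *)

(* Defs.v *)
From mathcomp Require Import all_boot all_order all_algebra.
From mathcomp Require Import all_reals.
Set Implicit Arguments. Unset Strict Implicit. Unset Printing Implicit Defensive.
Import Order.TTheory GRing.Theory Num.Theory.
Local Open Scope ring_scope.

Definition edges (R : realType) (U N : nat) (A : 'M[R]_(U, N)) : {set 'I_U * 'I_N} :=
  [set e | A e.1 e.2 == 1].

Definition ebasis (R : realType) (U : nat) (i : 'I_U) : 'cV[R]_U := delta_mx i 0.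

Definition fobj (R : realType) (U N : nat) (A : 'M[R]_(U, N)) (u : 'cV[R]_N)
  (ER : {set 'I_U * 'I_N}) : R :=
  2 * (\sum_(e in ER) ((u^T *m A^T *m ebasis R e.1) 0 0 * u e.2 0))
  - \sum_(i < U) \sum_(j < N | (i, j) \in ER) \sum_(s < N | (i, s) \in ER)
      u j 0 * u s 0.

(* Main.v *)
Require Import Defs.
From mathcomp Require Import all_boot all_order all_algebra.
From mathcomp Require Import all_reals.
From mathcomp Require Import lra.
Import Order.TTheory GRing.Theory Num.Theory.
Local Open Scope ring_scope.

Section H.
Variables (R : realType) (U N : nat) (A : 'M[R]_(U, N)) (u : 'cV[R]_N).

Definition ss (S : {set 'I_U * 'I_N}) (i : 'I_U) : R :=
  \sum_(j < N | (i, j) \in S) u j 0.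
Definition cc (i : 'I_U) : R := \sum_(j < N) A i j * u j 0.

Lemma cc_eq (i : 'I_U) : (u^T *m A^T *m ebasis R i) 0 0 = cc i.
Proof.
rewrite /ebasis mxE (bigD1 i) //= big1 => [|k /negbTE nk].
  rewrite !mxE eqxx /= addr0 mulr1 /cc.
  by apply: eq_bigr => j _; rewrite !mxE mulrC.
by rewrite !mxE nk mulr0.
Qed.

Lemma fobjE (S : {set 'I_U * 'I_N}) : fobj A u S = \sum_(i < U) (2 * cc i * ss S i - ss S i ^+ 2).
Proof.
rewrite /fobj sumrB; congr (_ - _); last first.
  apply: eq_bigr => i _; rewrite expr2 /ss mulr_suml.
  by apply: eq_bigr => j _; rewrite mulr_sumr.
rewrite mulr_sumr big_mkcond /=.
rewrite [RHS](eq_bigr (fun i => \sum_(j < N) if (i, j) \in S then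
   2 * cc i * u j 0 else 0)); last first.
  move=> i _; rewrite /ss mulr_sumr big_mkcond /=.
  by apply: eq_bigr => j _; case: ifP; rewrite ?mulr0.
rewrite pair_big /=; apply: eq_bigr => [[i j]] _ /=.
by case: ifP => _ //; rewrite cc_eq mulrA.
Qed.

Lemma ss_add (S : {set 'I_U * 'I_N}) (e : 'I_U * 'I_N) i : e \notin S ->
  ss (e |: S) i = ss S i + (if i == e.1 then u e.2 0 else 0).
Proof.
move=> eS; rewrite /ss [LHS]big_mkcond [in RHS]big_mkcond /= addrC.
have -> : (if i == e.1 then u e.2 0 else 0) =
   \sum_(j < N) (if (i, j) == e then u j 0 else 0).
  case: e eS => i0 j0 eS /=.
  case: (eqVneq i i0) => [->|ne].
    rewrite -big_mkcond /= (big_pred1 j0) // => j.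
    by rewrite xpair_eqE eqxx.
  by rewrite big1 // => j _; rewrite xpair_eqE (negbTE ne).
rewrite -big_split /=; apply: eq_bigr => j _.
rewrite in_setU1; case: eqP => [E|_] /=.
  by move: eS; rewrite -E => eS; rewrite (negbTE eS) addr0.
by rewrite add0r.
Qed.

End H.
Arguments ss {R U N} u S i.
Arguments cc {R U N} A u i.

Theorem theorem1 (R : realType) (U N : nat) (A : 'M[R]_(U, N))
  (u : 'cV[R]_N) (lam : R) :
  (forall i j, A i j = 0 \/ A i j = 1) ->
  (* lam = lambda_max(B), B = A^T A *)
  eigenvalue (A^T *m A) lam ->
  (forall mu, eigenvalue (A^T *m A) mu -> mu <= lam) ->
  (* u : unit-norm, entrywise nonnegative eigenvector for lam *)
  (A^T *m A) *m u = lam *: u ->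
  \sum_(j < N) u j 0 ^+ 2 = 1 ->
  (forall j, 0 <= u j 0) ->
  forall ER1 ER2 : {set 'I_U * 'I_N},
    ER1 \subset ER2 -> ER2 \subset edges A ->
    fobj A u ER1 <= fobj A u ER2 /\
    (forall e, e \in edges A :\: ER2 ->
       fobj A u (e |: ER2) - fobj A u ER2 <= fobj A u (e |: ER1) - fobj A u ER1).
Proof.
move=> A01 _ _ _ _ u0 ER1 ER2 /subsetP s12 /subsetP s2E.
have le12 i : ss u ER1 i <= ss u ER2 i.
  rewrite /ss big_mkcond [X in _ <= X]big_mkcond /=; apply: ler_sum => j _.
  case: ifP => h; first by rewrite (s12 _ h).
  by case: ifP.
have le2c i : ss u ER2 i <= cc A u i.
  rewrite /ss /cc big_mkcond /=; apply: ler_sum => j _.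
  case: ifP => h.
    by move: (s2E _ h); rewrite inE /= => /eqP ->; rewrite mul1r.
  by case: (A01 i j) => ->; rewrite ?mul0r ?mul1r.
split.
  rewrite !fobjE; apply: ler_sum => i _.
  have := le12 i; have := le2c i; nra.
move=> e; rewrite inE => /andP [eS2 _].
have eS1 : e \notin ER1 by apply: contra eS2; apply: s12.
rewrite !fobjE -!sumrB; apply: ler_sum => i _.
rewrite !ss_add //.
have d0 : 0 <= (if i == e.1 then u e.2 0 else 0) by case: ifP.
move: d0 (le12 i).
set d := (if _ then _ else _); nra.
Qed.
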